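(* Let $\alpha>0$, $\kappa>1/2$, $\gamma<3/2$ and $\nu\in\mathbb R$. Then for every $C>1$ there exist $a,b\in\mathbb N$ and $\beta\in(0,1)$ such that for every $C_{\mathrm{start}}\ge1$ and every $C_z\in[0,\infty)$ the parameters $$\lambda_n=a^{(b^n)},\quad r_n=C_{\mathrm{start}}(C_z^2+1)\lambda_0^\beta\lambda_n^{-\beta}\ (n\ge0),\qquad \ell_n=\lambda_n^{-1},\quad \mu_n=\sqrt{\lambda_{n-1}\lambda_n}\ (n\ge1)$$ satisfy, for all $n\ge1$: (R1) $\mu_n\le\lambda_n$; (R2) $\ell_n\le1$; (R3) $\lambda_n\in\mathbb N$, $12\lambda_n\le4\mu_{n+1}$, $10\le\mu_n$, $48\lambda_n\le\lambda_{n+1}$; and $$C\big(\mathfrak E^{\mathrm{miss}}_n+\mathfrak E^{\mathrm{com}}_n+\mathfrak E^{\mathrm{time}}_n+\mathfrak E^{\mathrm{dis}}_n+\mathfrak E^{\mathrm{trans}}_n+\mathfrak E^{\mathrm{sto}}_n\big)\le r_n ,$$ where, with $\mathfrak S_{N,\theta}:=\sum_{k=1}^N4^{N-k}\ell_k^{-\theta}r_{k-1}^{1/2}$ (so $\mathfrak S_{0,\theta}=0$), $$\mathfrak E^{\mathrm{miss}}_n=\Big\{\log\mu_n\Big(\tfrac{\lambda_{n-1}}{\mu_n}+\tfrac{\mu_n}{\lambda_n}\Big)^2+\tfrac{\lambda_{n-1}}{\lambda_n}\Big\}r_{n-1},$$ $$\mathfrak E^{\mathrm{com}}_n=\log(\lambda_n)\lambda_{n-1}\ell_n^\alpha\mathfrak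 S_{n-1,\alpha}\mathfrak S_{n-1,0}+\log(\lambda_n)\lambda_{n-1}^{1/2}\big(\ell_n^\alpha\mathfrak S_{n-1,\alpha}+\lambda_{n-1}^{-\kappa}\mathfrak S_{n-1,0}\big)C_z+\log(\lambda_n)(\ell_n^\alpha+\lambda_{n-1}^{-\kappa})C_z^2,$$ $$\mathfrak E^{\mathrm{time}}_n=\log(\lambda_n)\lambda_n^{-3/2}r_{n-1}^{1/2}\ell_n^{-1},\qquad \mathfrak E^{\mathrm{dis}}_n=\log(\lambda_n)|\nu|\lambda_n^{\gamma-3/2}r_{n-1}^{1/4},$$ $$\mathfrak E^{\mathrm{trans}}_n=\log(\lambda_n)\lambda_{n-1}^{1/2}\lambda_n^{-1/2}r_{n-1}^{1/2}\mathfrak S_{n-1,0},\qquad \mathfrak E^{\mathrm{sto}}_n=\log(\lambda_n)\lambda_n^{-1/2}r_{n-1}^{1/2}C_z.$$ Moreover $b$ can be taken to be any integer with $b>1+1/\alpha$, and $\beta$ can be taken so that $\beta<(\alpha(b-1)-1)/b$.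
   Context: All quantities are real numbers; $\log$ is the natural logarithm. No probabilistic content is involved. *)

(* Defs.v *)
From Stdlib Require Import Reals.
Open Scope R_scope.

Fixpoint sumR (f : nat -> R) (N : nat) : R :=
  match N with
  | O => 0
  | S m => sumR f m + f (S m)
  end.

Section Params.
Variables (a b : nat) (beta Cstart Cz : R).

Definition lam (n : nat) : R := INR (Nat.pow a (Nat.pow b n)).
Definition rr (n : nat) : R :=
  Cstart * (Cz ^ 2 + 1) * Rpower (lam 0) beta * Rpower (lam n) (- beta).
Definition ell (n : nat) : R := / lam n.
Definition mu (n : nat) : R := sqrt (lam (n - 1) * lam n).

Definition SS (N : nat) (theta : R) : R :=
  sumR (fun k => 4 ^ (N - k) * Rpower (ell k) (- theta)
                 * Rpower (rr (k - 1)) (1/2)) N.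

Definition Emiss (n : nat) : R :=
  (ln (mu n) * (lam (n - 1) / mu n + mu n / lam n) ^ 2
   + lam (n - 1) / lam n) * rr (n - 1).

Definition Ecom (alpha kappa : R) (n : nat) : R :=
  ln (lam n) * lam (n - 1) * Rpower (ell n) alpha
     * SS (n - 1) alpha * SS (n - 1) 0
  + ln (lam n) * Rpower (lam (n - 1)) (1/2)
     * (Rpower (ell n) alpha * SS (n - 1) alpha
        + Rpower (lam (n - 1)) (- kappa) * SS (n - 1) 0) * Cz
  + ln (lam n) * (Rpower (ell n) alpha + Rpower (lam (n - 1)) (- kappa))
     * Cz ^ 2.

Definition Etime (n : nat) : R :=
  ln (lam n) * Rpower (lam n) (- (3/2)) * Rpower (rr (n - 1)) (1/2) * / ell n.

Definition Edis (gamma nu : R) (n : nat) : R :=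
  ln (lam n) * Rabs nu * Rpower (lam n) (gamma - 3/2)
    * Rpower (rr (n - 1)) (1/4).

Definition Etrans (n : nat) : R :=
  ln (lam n) * Rpower (lam (n - 1)) (1/2) * Rpower (lam n) (- (1/2))
    * Rpower (rr (n - 1)) (1/2) * SS (n - 1) 0.

Definition Esto (n : nat) : R :=
  ln (lam n) * Rpower (lam n) (- (1/2)) * Rpower (rr (n - 1)) (1/2) * Cz.

End Params.

(* Main.v *)
Require Import Defs.
From Stdlib Require Import Reals Lra Lia Psatz.
Open Scope R_scope.

Lemma exp_le' x y : x <= y -> exp x <= exp y.
Proof. intros [H|H]; [left; apply exp_increasing; auto | subst; lra]. Qed.

Lemma exp_pow_n n x : exp (INR n * x) = exp x ^ n.
Proof.
  induction n as [|n IH]. simpl. rewrite Rmult_0_l, exp_0; auto.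
  rewrite S_INR, Rmult_plus_distr_r, Rmult_1_l, exp_plus, IH. simpl. ring.
Qed.

Lemma exp_ge_pow8 y : 0 <= y -> y ^ 8 <= exp (8 * y).
Proof.
  intros Hy. replace (8 * y) with (INR 8 * y) by (simpl; ring).
  rewrite exp_pow_n. apply pow_incr. split; auto.
  generalize (exp_ineq1_le y); lra.
Qed.

Lemma core (beta M C t : R) : 0 < beta -> 0 < M -> 0 < C -> 1 <= t ->
  10 * C * M * (8 / beta) ^ 8 <= t ->
  M * t ^ 7 * exp (- (beta * t)) <= / (10 * C).
Proof.
  intros Hb HM HC Ht H.
  set (q := (beta / 8) ^ 8).
  assert (Hq : 0 < q) by (unfold q; apply pow_lt; lra).
  assert (Hq' : (8 / beta) ^ 8 = / q).
  { unfold q. rewrite <- pow_inv. f_equal. field. lra. }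
  rewrite Hq' in H.
  assert (H2 : 10 * C * M <= t * q).
  { apply Rmult_le_reg_r with (/ q). apply Rinv_0_lt_compat; auto.
    replace (t * q * / q) with t by (field; lra). lra. }
  assert (He : (beta * t / 8) ^ 8 <= exp (beta * t)).
  { replace (beta * t) with (8 * (beta * t / 8)) at 2 by field.
    apply exp_ge_pow8. assert (0 < beta * t) by nra. lra. }
  assert (He2 : (beta * t / 8) ^ 8 = q * t ^ 8).
  { unfold q. rewrite <- Rpow_mult_distr. f_equal. field. }
  rewrite exp_Ropp.
  assert (Hex : 0 < exp (beta * t)) by apply exp_pos.
  apply Rmult_le_reg_r with (exp (beta * t) * (10 * C)).
  apply Rmult_lt_0_compat; lra.
  replace (M * t ^ 7 * / exp (beta * t) * (exp (beta * t) * (10 * C)))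
    with (10 * C * M * t ^ 7) by (field; lra).
  replace (/ (10 * C) * (exp (beta * t) * (10 * C))) with (exp (beta * t)) by (field; lra).
  assert (Ht7 : 0 < t ^ 7) by (apply pow_lt; lra).
  apply Rle_trans with (t * q * t ^ 7).
  apply Rmult_le_compat_r; lra.
  replace (t * q * t ^ 7) with (q * t ^ 8) by ring. lra.
Qed.


Lemma lam_e a b n : (0 < a)%nat -> lam a b n = exp (INR b ^ n * ln (INR a)).
Proof.
  intros Ha. unfold lam. rewrite pow_INR, <- Rpower_pow.
  unfold Rpower. rewrite pow_INR. auto.
  apply lt_0_INR; auto.
Qed.

Lemma Rp_lam a b n y : (0 < a)%nat ->
  Rpower (lam a b n) y = exp (y * (INR b ^ n * ln (INR a))).
Proof. intros Ha. unfold Rpower. rewrite lam_e, ln_exp; auto. Qed.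

Lemma ln_lam a b n : (0 < a)%nat -> ln (lam a b n) = INR b ^ n * ln (INR a).
Proof. intros Ha. rewrite lam_e, ln_exp; auto. Qed.

Lemma ell_e a b n : (0 < a)%nat -> ell a b n = exp (- (INR b ^ n * ln (INR a))).
Proof. intros Ha. unfold ell. rewrite lam_e, exp_Ropp; auto. Qed.

Lemma Rp_ell a b n y : (0 < a)%nat ->
  Rpower (ell a b n) y = exp (- (y * (INR b ^ n * ln (INR a)))).
Proof. intros Ha. unfold Rpower. rewrite ell_e, ln_exp; auto. f_equal; ring. Qed.

Lemma sqrt_exp x : sqrt (exp x) = exp (x / 2).
Proof.
  replace (exp x) with (exp (x/2) * exp (x/2)).
  apply sqrt_square. left; apply exp_pos.
  rewrite <- exp_plus. f_equal; field.
Qed.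

Lemma mu_e a b n : (0 < a)%nat ->
  mu a b n = exp ((INR b ^ (n - 1) + INR b ^ n) * ln (INR a) / 2).
Proof.
  intros Ha. unfold mu. rewrite !lam_e, <- exp_plus, sqrt_exp; auto.
  f_equal. field.
Qed.

Lemma rr_e a b beta Cs Cz n : (0 < a)%nat ->
  rr a b beta Cs Cz n = Cs * (Cz ^ 2 + 1) * exp (beta * ln (INR a))
     * exp (- (beta * (INR b ^ n * ln (INR a)))).
Proof.
  intros Ha. unfold rr. rewrite !Rp_lam; auto. simpl (INR b ^ 0).
  rewrite Rmult_1_l. f_equal. f_equal. ring.
Qed.

Lemma rr_pos a b beta Cs Cz n : (0 < a)%nat -> 1 <= Cs ->
  0 < rr a b beta Cs Cz n.
Proof.
  intros Ha HC. rewrite rr_e; auto.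
  assert (0 < Cz ^ 2 + 1) by (generalize (pow2_ge_0 Cz); lra).
  repeat apply Rmult_lt_0_compat; try apply exp_pos; lra.
Qed.

Lemma rr_le a b beta Cs Cz n : (0 < a)%nat -> 1 <= INR b -> 0 <= ln (INR a) ->
  0 <= beta -> 1 <= Cs ->
  rr a b beta Cs Cz n <= Cs * (Cz ^ 2 + 1).
Proof.
  intros Ha HB HL Hb HC. rewrite rr_e; auto.
  assert (0 < Cz ^ 2 + 1) by (generalize (pow2_ge_0 Cz); lra).
  rewrite Rmult_assoc, <- exp_plus.
  rewrite <- (Rmult_1_r (Cs * (Cz^2+1))) at 2.
  apply Rmult_le_compat_l. apply Rmult_le_pos; lra.
  rewrite <- exp_0. apply exp_le'.
  assert (1 <= INR b ^ n) by (apply pow_R1_Rle; auto).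
  assert (0 <= beta * ln (INR a) * (INR b ^ n - 1)).
  { apply Rmult_le_pos. apply Rmult_le_pos; lra. lra. }
  lra.
Qed.

Lemma Rp_rr_le a b beta Cs Cz n p : (0 < a)%nat -> 1 <= INR b -> 0 <= ln (INR a) ->
  0 <= beta -> 1 <= Cs -> 0 <= p ->
  Rpower (rr a b beta Cs Cz n) p <= Rpower (Cs * (Cz ^ 2 + 1)) p.
Proof.
  intros. apply Rle_Rpower_l; auto. split. apply rr_pos; auto. apply rr_le; auto.
Qed.

Lemma sumR_le f N M : (forall k, (1 <= k <= N)%nat -> f k <= M) ->
  sumR f N <= INR N * M.
Proof.
  induction N as [|N IH]; intros H; simpl sumR.
  simpl. lra.
  rewrite S_INR.
  assert (sumR f N <= INR N * M) by (apply IH; intros; apply H; lia).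
  assert (f (S N) <= M) by (apply H; lia). lra.
Qed.

Lemma sumR_nonneg f N : (forall k, 0 <= f k) -> 0 <= sumR f N.
Proof. induction N; intros H; simpl; [lra|]. specialize (IHN H). specialize (H (S N)). lra. Qed.

Lemma INR_le_2pow m : INR m <= 2 ^ m.
Proof.
  induction m. simpl; lra.
  rewrite S_INR. simpl. assert (1 <= 2 ^ m) by (apply pow_R1_Rle; lra). lra.
Qed.

Lemma m4_le m B : 2 <= B -> INR m * 4 ^ m <= (B ^ m) ^ 3.
Proof.
  intros HB.
  assert (H2 : 2 ^ m <= B ^ m) by (apply pow_incr; lra).
  assert (H0 : 0 <= 2 ^ m) by (apply pow_le; lra).
  replace 4 with (2 * 2) by ring. rewrite Rpow_mult_distr.
  assert (H1 := INR_le_2pow m).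
  assert (0 <= INR m) by apply pos_INR.
  replace ((B ^ m) ^ 3) with (B ^ m * (B ^ m * B ^ m)) by ring.
  apply Rmult_le_compat; try nra.
Qed.

Lemma SS_nonneg a b beta Cs Cz N th : SS a b beta Cs Cz N th >= 0.
Proof.
  apply Rle_ge. unfold SS. apply sumR_nonneg. intros k.
  apply Rmult_le_pos. apply Rmult_le_pos. apply pow_le; lra.
  unfold Rpower; left; apply exp_pos. unfold Rpower; left; apply exp_pos.
Qed.

Lemma SS_le a b beta Cs Cz m th : (0 < a)%nat -> 2 <= INR b -> 0 <= ln (INR a) ->
  0 <= beta -> 1 <= Cs -> 0 <= th ->
  SS a b beta Cs Cz m th <=
   (INR b ^ m) ^ 3 * exp (th * (INR b ^ m * ln (INR a)))
     * Rpower (Cs * (Cz ^ 2 + 1)) (1/2).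
Proof.
  intros Ha HB HL Hb HC Hth.
  unfold SS.
  eapply Rle_trans. apply sumR_le with
    (M := 4 ^ m * exp (th * (INR b ^ m * ln (INR a))) * Rpower (Cs * (Cz ^ 2 + 1)) (1/2)).
  - intros k Hk.
    assert (HP : 0 <= Rpower (Cs * (Cz ^ 2 + 1)) (1/2)) by (unfold Rpower; left; apply exp_pos).
    apply Rmult_le_compat.
    apply Rmult_le_pos. apply pow_le; lra. unfold Rpower; left; apply exp_pos.
    unfold Rpower; left; apply exp_pos.
    apply Rmult_le_compat. apply pow_le; lra. unfold Rpower; left; apply exp_pos.
    apply Rle_pow; [lra|lia].
    rewrite Rp_ell; auto. apply exp_le'.
    assert (INR b ^ k <= INR b ^ m) by (apply Rle_pow; [lra|lia]).
    assert (0 <= th * ln (INR a) * (INR b ^ m - INR b ^ k)).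
    { apply Rmult_le_pos. apply Rmult_le_pos; lra. lra. }
    lra.
    apply Rp_rr_le; auto; lra.
  - assert (0 <= exp (th * (INR b ^ m * ln (INR a))) * Rpower (Cs * (Cz ^ 2 + 1)) (1/2)).
    { apply Rmult_le_pos; unfold Rpower; left; apply exp_pos. }
    assert (Hm4 := m4_le m (INR b) HB).
    replace (INR m * (4 ^ m * exp (th * (INR b ^ m * ln (INR a))) * Rpower (Cs * (Cz ^ 2 + 1)) (1 / 2)))
      with ((INR m * 4 ^ m) * (exp (th * (INR b ^ m * ln (INR a))) * Rpower (Cs * (Cz ^ 2 + 1)) (1 / 2))) by ring.
    rewrite !Rmult_assoc. rewrite <- (Rmult_assoc ((INR b ^ m) ^ 3)).
    nra.
Qed.

Lemma G (beta B t M C P X K' T0 : R) : 0 < beta -> 0 < M -> 0 < C -> 1 <= t ->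
  10 * C * M * (8 / beta) ^ 8 <= t -> 0 <= P -> P <= M * t ^ 7 ->
  X <= - (beta * (B * t)) - beta * t -> 0 <= K' -> K' <= T0 ->
  P * exp X * K' <= T0 * exp (- (beta * (B * t))) / (10 * C).
Proof.
  intros Hb HM HC Ht HL HP HPM HX HK HKT.
  assert (Hc := core beta M C t Hb HM HC Ht HL).
  assert (HeX : exp X <= exp (- (beta * t)) * exp (- (beta * (B * t)))).
  { rewrite <- exp_plus. apply exp_le'. lra. }
  assert (He1 : 0 < exp X) by apply exp_pos.
  assert (He2 : 0 < exp (- (beta * (B * t)))) by apply exp_pos.
  assert (He3 : 0 < exp (- (beta * t))) by apply exp_pos.
  assert (H1 : P * exp X <= / (10 * C) * exp (- (beta * (B * t)))).
  { apply Rle_trans with (M * t ^ 7 * (exp (- (beta * t)) * exp (- (beta * (B * t))))).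
    apply Rmult_le_compat; lra.
    rewrite <- Rmult_assoc. apply Rmult_le_compat_r; lra. }
  assert (0 <= P * exp X) by (apply Rmult_le_pos; lra).
  apply Rle_trans with (/ (10 * C) * exp (- (beta * (B * t))) * T0).
  apply Rmult_le_compat; lra.
  unfold Rdiv. rewrite (Rmult_comm T0). rewrite Rmult_assoc. rewrite (Rmult_comm _ T0).
  rewrite <- Rmult_assoc. lra.
Qed.

Lemma exp_div x y : exp x / exp y = exp (x - y).
Proof. unfold Rminus, Rdiv. rewrite exp_plus, exp_Ropp. auto. Qed.

Theorem mainTheorem2 (alpha kappa gamma nu : R)
  (Halpha : 0 < alpha) (Hkappa : 1/2 < kappa) (Hgamma : gamma < 3/2) :
  forall C : R, 1 < C ->
  forall b : nat, 1 + / alpha < INR b ->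
  exists (a : nat) (beta : R),
    0 < beta /\ beta < 1 /\ beta < (alpha * (INR b - 1) - 1) / INR b /\
    forall Cstart Cz : R, 1 <= Cstart -> 0 <= Cz ->
    forall n : nat, (1 <= n)%nat ->
      (* (R1) *) mu a b n <= lam a b n /\
      (* (R2) *) ell a b n <= 1 /\
      (* (R3) *) (exists m : nat, lam a b n = INR m) /\
                 12 * lam a b n <= 4 * mu a b (S n) /\
                 10 <= mu a b n /\
                 48 * lam a b n <= lam a b (S n) /\
      C * (Emiss a b beta Cstart Cz n
           + Ecom a b beta Cstart Cz alpha kappa n
           + Etime a b beta Cstart Cz n
           + Edis a b beta Cstart Cz gamma nu n
           + Etrans a b beta Cstart Cz n
           + Esto a b beta Cstart Cz n)
        <= rr a b beta Cstart Cz n.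
Proof.
  intros C HC b Hb.
  remember (INR b) as B eqn:HBdef.
  assert (Hia : 0 < / alpha) by (apply Rinv_0_lt_compat; auto).
  assert (HB1 : 1 < B) by lra.
  assert (HB : 2 <= B).
  { subst B. assert (H : (2 <= b)%nat).
    { destruct b as [|[|b]]; simpl in HB1; try lra. lia. }
    apply le_INR in H. simpl in H. lra. }
  assert (Had : 1 < alpha * (B - 1)).
  { assert (H : / alpha < B - 1) by lra.
    apply Rmult_lt_compat_l with (r := alpha) in H; auto.
    rewrite Rinv_r in H; lra. }
  set (d1 := (alpha * (B - 1) - 1) / B).
  assert (Hd1 : 0 < d1) by (unfold d1; apply Rdiv_lt_0_compat; lra).
  set (d2 := (kappa - 1/2) / B).
  assert (Hd2 : 0 < d2) by (unfold d2; apply Rdiv_lt_0_compat; lra).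
  set (beta := Rmin (Rmin d1 d2) (Rmin (3/2 - gamma) (1/4)) / 2).
  assert (Hm1 := Rmin_l (Rmin d1 d2) (Rmin (3/2 - gamma) (1/4))).
  assert (Hm2 := Rmin_r (Rmin d1 d2) (Rmin (3/2 - gamma) (1/4))).
  assert (Hm3 := Rmin_l d1 d2). assert (Hm4 := Rmin_r d1 d2).
  assert (Hm5 := Rmin_l (3/2 - gamma) (1/4)). assert (Hm6 := Rmin_r (3/2 - gamma) (1/4)).
  assert (Hbpos : 0 < beta).
  { unfold beta. apply Rmin_case; apply Rmin_case; try apply Rmin_case; try apply Rmin_case; lra. }
  assert (Hb1 : beta <= d1 / 2) by (unfold beta; lra).
  assert (Hb2 : beta <= d2 / 2) by (unfold beta; lra).
  assert (Hb3 : beta <= (3/2 - gamma) / 2) by (unfold beta; lra).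
  assert (Hb4 : beta <= 1/8) by (unfold beta; lra).
  assert (Hbd1 : 2 * beta * B <= alpha * (B - 1) - 1).
  { unfold d1 in Hb1. apply Rmult_le_compat_r with (r := 2 * B) in Hb1; [|lra].
    replace ((alpha * (B - 1) - 1) / B / 2 * (2 * B)) with (alpha * (B - 1) - 1) in Hb1
      by (field; lra). lra. }
  assert (Hbd2 : 2 * beta * B <= kappa - 1/2).
  { unfold d2 in Hb2. apply Rmult_le_compat_r with (r := 2 * B) in Hb2; [|lra].
    replace ((kappa - 1/2) / B / 2 * (2 * B)) with (kappa - 1/2) in Hb2
      by (field; lra). lra. }
  clearbody beta. clear Hm1 Hm2 Hm3 Hm4 Hm5 Hm6.
  set (M := (2 * B + 3) * (1 + Rabs nu)).
  assert (HM : 2 * B + 3 <= M).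
  { unfold M. assert (0 <= Rabs nu) by apply Rabs_pos. nra. }
  assert (HMn : (2 * B + 3) * Rabs nu <= M).
  { unfold M. assert (0 <= Rabs nu) by apply Rabs_pos. nra. }
  assert (HMpos : 0 < M) by lra. clearbody M.
  set (L0 := Rmax 100 (10 * C * M * (8 / beta) ^ 8)).
  destruct (INR_unbounded (exp L0)) as [a Ha].
  assert (Hapos : (0 < a)%nat).
  { destruct a. simpl in Ha. generalize (exp_pos L0); lra. lia. }
  remember (ln (INR a)) as L eqn:HLdef.
  assert (HL : L0 <= L).
  { subst L. rewrite <- (ln_exp L0). left. apply ln_increasing. apply exp_pos. lra. }
  assert (HL100 : 100 <= L) by (generalize (Rmax_l 100 (10 * C * M * (8 / beta) ^ 8)); fold L0; lra).
  assert (HLc : 10 * C * M * (8 / beta) ^ 8 <= L) by (generalize (Rmax_r 100 (10 * C * M * (8 / beta) ^ 8)); fold L0; lra).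
  clearbody L0.
  exists a, beta.
  split; [lra|]. split; [lra|]. split; [fold d1; lra|].
  intros Cs Cz HCs HCz n Hn.
  destruct n as [|m]; [lia|].
  remember (Cs * (Cz ^ 2 + 1)) as K eqn:HKdef.
  assert (HK : Cz ^ 2 + 1 <= K).
  { subst K. assert (0 <= Cz ^ 2) by apply pow2_ge_0. nra. }
  assert (HK1 : 1 <= K) by (generalize (pow2_ge_0 Cz); lra).
  remember (Rpower K (1/2)) as s eqn:Hsdef.
  assert (Hss : s * s = K).
  { subst s. rewrite <- Rpower_plus. replace (1/2+1/2) with 1 by field. apply Rpower_1; lra. }
  assert (Hs1 : 1 <= s).
  { subst s. rewrite <- (Rpower_O K) at 1 by lra. apply Rle_Rpower; lra. }
  assert (HsK : s <= K) by nra.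
  assert (HCzs : Cz <= s) by nra.
  assert (HsCz : s * Cz <= K) by nra.
  assert (HCz2 : Cz ^ 2 <= K) by lra.
  remember (B ^ m) as u eqn:Hudef.
  assert (Hu : 1 <= u) by (subst u; apply pow_R1_Rle; lra).
  remember (u * L) as t eqn:Htdef.
  assert (Ht : L <= t) by (subst t; nra).
  assert (Hut : u <= t) by (subst t; nra).
  assert (HL0 : 0 <= L) by lra.
  assert (Hbm : INR b ^ m * ln (INR a) = t) by (rewrite <- HBdef, <- HLdef; subst; ring).
  assert (Hbm1 : INR b ^ S m * ln (INR a) = B * t) by (rewrite <- HBdef, <- HLdef; subst; simpl; ring).
  assert (Hbm2 : INR b ^ S (S m) * ln (INR a) = B * B * t) by (rewrite <- HBdef, <- HLdef; subst; simpl; ring).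
  assert (Lam0 : lam a b m = exp t) by (rewrite lam_e, Hbm; auto).
  assert (Lam1 : lam a b (S m) = exp (B * t)) by (rewrite lam_e, Hbm1; auto).
  assert (Lam2 : lam a b (S (S m)) = exp (B * B * t)) by (rewrite lam_e, Hbm2; auto).
  assert (RLam0 : forall y, Rpower (lam a b m) y = exp (y * t)) by (intros; rewrite Rp_lam, Hbm; auto).
  assert (RLam1 : forall y, Rpower (lam a b (S m)) y = exp (y * (B * t))) by (intros; rewrite Rp_lam, Hbm1; auto).
  assert (LLam1 : ln (lam a b (S m)) = B * t) by (rewrite ln_lam, Hbm1; auto).
  assert (REll1 : forall y, Rpower (ell a b (S m)) y = exp (- (y * (B * t)))) by (intros; rewrite Rp_ell, Hbm1; auto).
  assert (Ell1 : ell a b (S m) = exp (- (B * t))) by (rewrite ell_e, Hbm1; auto).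
  assert (Mu1 : mu a b (S m) = exp ((t + B * t) / 2)).
  { rewrite mu_e; auto. replace (S m - 1)%nat with m by lia. f_equal.
    rewrite Rmult_plus_distr_r, Hbm, Hbm1. auto. }
  assert (Mu2 : mu a b (S (S m)) = exp ((B * t + B * B * t) / 2)).
  { rewrite mu_e; auto. replace (S (S m) - 1)%nat with (S m) by lia. f_equal.
    rewrite Rmult_plus_distr_r, Hbm2, Hbm1. auto. }
  assert (Rr0 : rr a b beta Cs Cz m = K * exp (beta * L) * exp (- (beta * t))).
  { rewrite rr_e, Hbm, <- HLdef, HKdef; auto. }
  assert (Rr1 : rr a b beta Cs Cz (S m) = K * exp (beta * L) * exp (- (beta * (B * t)))).
  { rewrite rr_e, Hbm1, <- HLdef, HKdef; auto. }
  assert (HB0 : 2 <= INR b) by lra.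
  assert (SSa : SS a b beta Cs Cz m alpha <= u ^ 3 * exp (alpha * t) * s).
  { rewrite Hsdef, Hudef, HBdef, <- Hbm, HKdef. apply SS_le; auto; lra. }
  assert (SS0 : SS a b beta Cs Cz m 0 <= u ^ 3 * s).
  { assert (H := SS_le a b beta Cs Cz m 0 Hapos HB0 ltac:(lra) ltac:(lra) HCs ltac:(lra)).
    rewrite Rmult_0_l, exp_0, Rmult_1_r in H. rewrite Hsdef, Hudef, HBdef, HKdef. exact H. }
  assert (SSap := SS_nonneg a b beta Cs Cz m alpha).
  assert (SS0p := SS_nonneg a b beta Cs Cz m 0).
  assert (Rh : Rpower (rr a b beta Cs Cz m) (1/2) <= s).
  { rewrite Hsdef, HKdef. apply Rp_rr_le; auto; lra. }
  assert (Rq : Rpower (rr a b beta Cs Cz m) (1/4) <= K).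
  { apply Rle_trans with (Rpower K (1/4)). rewrite HKdef. apply Rp_rr_le; auto; lra.
    rewrite <- (Rpower_1 K) at 2 by lra. apply Rle_Rpower; lra. }
  assert (Rhp : 0 <= Rpower (rr a b beta Cs Cz m) (1/2)) by (unfold Rpower; left; apply exp_pos).
  assert (Rqp : 0 <= Rpower (rr a b beta Cs Cz m) (1/4)) by (unfold Rpower; left; apply exp_pos).
  assert (Et0 : 0 < exp t) by apply exp_pos.
  assert (EBt : 0 < exp (B * t)) by apply exp_pos.
  split; [| split; [| split; [| split; [| split; [| split]]]]].
  - rewrite Mu1, Lam1. apply exp_le'. nra.
  - rewrite Ell1, <- exp_0. apply exp_le'. nra.
  - unfold lam. eauto.
  - rewrite Lam1, Mu2.
    replace ((B * t + B * B * t) / 2) with (B * t + (B * B * t - B * t) / 2) by field.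
    rewrite exp_plus. assert (Hx := exp_ineq1_le ((B * B * t - B * t) / 2)).
    assert (Hy : 0 <= B * t * (B - 2)) by (apply Rmult_le_pos; nra).
    assert (Hz : 3 <= exp ((B * B * t - B * t) / 2)) by nra.
    assert (0 <= exp (B * t) * (exp ((B * B * t - B * t) / 2) - 3)) by (apply Rmult_le_pos; lra).
    nra.
  - rewrite Mu1. assert (Hx := exp_ineq1_le ((t + B * t) / 2)). nra.
  - rewrite Lam1, Lam2.
    replace (B * B * t) with (B * t + (B * B * t - B * t)) by ring.
    rewrite exp_plus. assert (Hx := exp_ineq1_le (B * B * t - B * t)).
    assert (Hy : 0 <= B * t * (B - 2)) by (apply Rmult_le_pos; nra).
    assert (Hz : 48 <= exp (B * B * t - B * t)) by nra.
    assert (0 <= exp (B * t) * (exp (B * B * t - B * t) - 48)) by (apply Rmult_le_pos; lra).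
    nra.
  - unfold Emiss, Ecom, Etime, Edis, Etrans, Esto.
    replace (S m - 1)%nat with m by lia.
    rewrite LLam1, !RLam1, !RLam0, !REll1, Ell1, Mu1, Lam0, Lam1, Rr1, ln_exp.
    assert (Ht1 : 1 <= t) by lra.
    assert (HtL : 10 * C * M * (8 / beta) ^ 8 <= t) by lra.
    assert (Hexl : 1 <= exp (beta * L)).
    { rewrite <- exp_0 at 1. apply exp_le'. nra. }
    assert (HKT : K <= K * exp (beta * L)) by nra.
    assert (Ht6 : 1 <= t ^ 6) by (apply pow_R1_Rle; lra).
    assert (Ht7 : t ^ 7 = t * t ^ 6) by (simpl; ring).
    assert (HMt : M * t <= M * t ^ 7).
    { rewrite Ht7. assert (0 <= M * t * (t ^ 6 - 1)) by (apply Rmult_le_pos; nra). lra. }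
    assert (Hu3 : u ^ 3 <= t ^ 3) by (apply pow_incr; lra).
    assert (Hu6 : u ^ 6 <= t ^ 6) by (apply pow_incr; lra).
    assert (Hu3p : 0 <= u ^ 3) by (apply pow_le; lra).
    assert (Hu6p : 0 <= u ^ 6) by (apply pow_le; lra).
    assert (Ht3 : t ^ 3 <= t ^ 6) by (apply Rle_pow; [lra|lia]).
    assert (HBt7 : B * t * u ^ 6 <= M * t ^ 7).
    { assert (B * t * u ^ 6 <= B * t * t ^ 6) by (apply Rmult_le_compat_l; nra).
      assert (HH : B * t ^ 7 <= M * t ^ 7) by (apply Rmult_le_compat_r; [apply pow_le|]; lra).
      rewrite Ht7 in HH |- *. lra. }
    assert (HBt3 : B * t * u ^ 3 <= M * t ^ 7).
    { assert (B * t * u ^ 3 <= B * t * t ^ 6) by (apply Rmult_le_compat_l; nra).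
      assert (HH : B * t ^ 7 <= M * t ^ 7) by (apply Rmult_le_compat_r; [apply pow_le|]; lra).
      rewrite Ht7 in HH |- *. lra. }
    assert (HBt : B * t <= M * t ^ 7).
    { assert (B * t <= M * t) by (apply Rmult_le_compat_r; lra). lra. }
    assert (HBn : B * Rabs nu * t <= M * t ^ 7).
    { assert (0 <= Rabs nu) by apply Rabs_pos.
      assert (B * Rabs nu <= M) by nra.
      assert (B * Rabs nu * t <= M * t) by (apply Rmult_le_compat_r; lra). lra. }
    assert (HPm : 2 * (1 + B) * t + 1 <= M * t ^ 7).
    { assert ((2 * B + 3) * t <= M * t) by (apply Rmult_le_compat_r; lra). nra. }
    assert (HBt0 : 0 <= B * t) by (apply Rmult_le_pos; lra).
    assert (HbB : beta <= beta * B) by (clear - Hbpos HB; nra).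
    assert (HbB8 : beta * B <= B / 8) by (clear - Hb4 HB; nra).
    assert (Hg : 2 * beta * B <= (3/2 - gamma) * B) by (clear - Hb3 HB; nra).
    set (T0 := K * exp (beta * L)).
    assert (HT0ge : K <= T0) by (unfold T0; lra).
    assert (Hsp : 0 <= s) by lra.
    assert (T1 : ((t + B * t) / 2 *
        (exp t / exp ((t + B * t) / 2) + exp ((t + B * t) / 2) / exp (B * t)) ^ 2 +
        exp t / exp (B * t)) * rr a b beta Cs Cz m
        <= T0 * exp (- (beta * (B * t))) / (10 * C)).
    { rewrite Rr0. rewrite !exp_div.
      replace (t - (t + B * t) / 2) with (- ((B - 1) * t / 2)) by field.
      replace ((t + B * t) / 2 - B * t) with (- ((B - 1) * t / 2)) by field.
      replace (exp (t - B * t)) with (exp (- ((B - 1) * t / 2)) * exp (- ((B - 1) * t / 2)))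
        by (rewrite <- exp_plus; f_equal; field).
      replace (((t + B * t) / 2 * (exp (- ((B - 1) * t / 2)) + exp (- ((B - 1) * t / 2))) ^ 2 +
          exp (- ((B - 1) * t / 2)) * exp (- ((B - 1) * t / 2))) *
          (K * exp (beta * L) * exp (- (beta * t))))
        with ((2 * (1 + B) * t + 1) * exp (- ((B - 1) * t / 2) + - ((B - 1) * t / 2) + - (beta * t)) * T0)
        by (unfold T0; rewrite !exp_plus; field).
      apply (G beta B t M C); [lra|lra|lra|lra|lra| first [lra | (repeat apply Rmult_le_pos; try apply Rabs_pos; try apply pow_le; try apply pow2_ge_0; lra)] | lra | (assert (0 <= t * (B - 1 - beta * B)) by (apply Rmult_le_pos; lra); lra) | first [apply pow2_ge_0 | lra | (apply Rmult_le_pos; lra)] | lra ]. }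
    assert (T2 : B * t * exp t * exp (- (alpha * (B * t))) * SS a b beta Cs Cz m alpha *
        SS a b beta Cs Cz m 0 <= T0 * exp (- (beta * (B * t))) / (10 * C)).
    { apply Rle_trans with (B * t * exp t * exp (- (alpha * (B * t))) * (u ^ 3 * exp (alpha * t) * s) * (u ^ 3 * s)).
      { assert (0 <= B * t * exp t * exp (- (alpha * (B * t)))).
        { assert (0 < exp (- (alpha * (B * t)))) by apply exp_pos. apply Rmult_le_pos; [|lra]. apply Rmult_le_pos; lra. }
        apply Rmult_le_compat; try lra. apply Rmult_le_pos; lra.
        apply Rmult_le_compat_l; lra. }
      replace (B * t * exp t * exp (- (alpha * (B * t))) * (u ^ 3 * exp (alpha * t) * s) * (u ^ 3 * s))
        with (B * t * u ^ 6 * exp (t + - (alpha * (B * t)) + alpha * t) * (s * s))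
        by (rewrite !exp_plus; ring).
      apply (G beta B t M C); [lra|lra|lra|lra|lra| first [lra | (repeat apply Rmult_le_pos; try apply Rabs_pos; try apply pow_le; try apply pow2_ge_0; lra)] | lra | (assert (0 <= t * (alpha * B - alpha - 1 - beta * B - beta)) by (apply Rmult_le_pos; lra); lra) | first [apply pow2_ge_0 | lra | (apply Rmult_le_pos; lra)] | lra ]. }
    assert (T3 : B * t * exp (1 / 2 * t) * exp (- (alpha * (B * t))) * SS a b beta Cs Cz m alpha * Cz
        <= T0 * exp (- (beta * (B * t))) / (10 * C)).
    { apply Rle_trans with (B * t * exp (1 / 2 * t) * exp (- (alpha * (B * t))) * (u ^ 3 * exp (alpha * t) * s) * Cz).
      { assert (0 <= B * t * exp (1/2 * t) * exp (- (alpha * (B * t)))).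
        { assert (0 < exp (- (alpha * (B * t)))) by apply exp_pos.
          assert (0 < exp (1/2 * t)) by apply exp_pos. apply Rmult_le_pos; [|lra]. apply Rmult_le_pos; lra. }
        apply Rmult_le_compat_r; auto. apply Rmult_le_compat_l; lra. }
      replace (B * t * exp (1 / 2 * t) * exp (- (alpha * (B * t))) * (u ^ 3 * exp (alpha * t) * s) * Cz)
        with (B * t * u ^ 3 * exp (1 / 2 * t + - (alpha * (B * t)) + alpha * t) * (s * Cz))
        by (rewrite !exp_plus; ring).
      apply (G beta B t M C); [lra|lra|lra|lra|lra| first [lra | (repeat apply Rmult_le_pos; try apply Rabs_pos; try apply pow_le; try apply pow2_ge_0; lra)] | lra | (assert (0 <= t * (alpha * B - alpha - 1 - beta * B - beta)) by (apply Rmult_le_pos; lra); lra) | first [apply pow2_ge_0 | lra | (apply Rmult_le_pos; lra)] | lra ]. }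
    assert (T4 : B * t * exp (1 / 2 * t) * exp (- kappa * t) * SS a b beta Cs Cz m 0 * Cz
        <= T0 * exp (- (beta * (B * t))) / (10 * C)).
    { apply Rle_trans with (B * t * exp (1 / 2 * t) * exp (- kappa * t) * (u ^ 3 * s) * Cz).
      { assert (0 <= B * t * exp (1/2 * t) * exp (- kappa * t)).
        { assert (0 < exp (- kappa * t)) by apply exp_pos.
          assert (0 < exp (1/2 * t)) by apply exp_pos. apply Rmult_le_pos; [|lra]. apply Rmult_le_pos; lra. }
        apply Rmult_le_compat_r; auto. apply Rmult_le_compat_l; lra. }
      replace (B * t * exp (1 / 2 * t) * exp (- kappa * t) * (u ^ 3 * s) * Cz)
        with (B * t * u ^ 3 * exp (1 / 2 * t + - kappa * t) * (s * Cz))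
        by (rewrite !exp_plus; ring).
      apply (G beta B t M C); [lra|lra|lra|lra|lra| first [lra | (repeat apply Rmult_le_pos; try apply Rabs_pos; try apply pow_le; try apply pow2_ge_0; lra)] | lra | (assert (0 <= t * (kappa - 1/2 - beta * B - beta)) by (apply Rmult_le_pos; lra); lra) | first [apply pow2_ge_0 | lra | (apply Rmult_le_pos; lra)] | lra ]. }
    assert (T5 : B * t * exp (- (alpha * (B * t))) * Cz ^ 2
        <= T0 * exp (- (beta * (B * t))) / (10 * C)).
    { apply (G beta B t M C); [lra|lra|lra|lra|lra| first [lra | (repeat apply Rmult_le_pos; try apply Rabs_pos; try apply pow_le; try apply pow2_ge_0; lra)] | lra | (assert (0 <= t * (alpha * B - beta * B - beta)) by (apply Rmult_le_pos; lra); lra) | first [apply pow2_ge_0 | lra | (apply Rmult_le_pos; lra)] | lra ]. }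
    assert (T6 : B * t * exp (- kappa * t) * Cz ^ 2
        <= T0 * exp (- (beta * (B * t))) / (10 * C)).
    { apply (G beta B t M C); [lra|lra|lra|lra|lra| first [lra | (repeat apply Rmult_le_pos; try apply Rabs_pos; try apply pow_le; try apply pow2_ge_0; lra)] | lra | (assert (0 <= t * (kappa - beta * B - beta)) by (apply Rmult_le_pos; lra); lra) | first [apply pow2_ge_0 | lra | (apply Rmult_le_pos; lra)] | lra ]. }
    assert (T7 : B * t * exp (- (3 / 2) * (B * t)) * Rpower (rr a b beta Cs Cz m) (1 / 2) *
        / exp (- (B * t)) <= T0 * exp (- (beta * (B * t))) / (10 * C)).
    { rewrite exp_Ropp, Rinv_inv.
      apply Rle_trans with (B * t * exp (- (3 / 2) * (B * t) + B * t) * s).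
      { rewrite exp_plus.
        assert (0 < exp (- (3 / 2) * (B * t))) by apply exp_pos.
        assert (0 <= B * t * exp (- (3 / 2) * (B * t))) by (apply Rmult_le_pos; lra).
        assert (0 <= B * t * exp (- (3 / 2) * (B * t)) * exp (B * t)) by (apply Rmult_le_pos; lra).
        replace (B * t * (exp (- (3 / 2) * (B * t)) * exp (B * t)) * s) with
          (B * t * exp (- (3 / 2) * (B * t)) * exp (B * t) * s) by ring.
        replace (B * t * exp (- (3 / 2) * (B * t)) * Rpower (rr a b beta Cs Cz m) (1 / 2) * exp (B * t))
          with (B * t * exp (- (3 / 2) * (B * t)) * exp (B * t) * Rpower (rr a b beta Cs Cz m) (1 / 2)) by ring.
        apply Rmult_le_compat_l; lra. }
      apply (G beta B t M C); [lra|lra|lra|lra|lra| first [lra | (repeat apply Rmult_le_pos; try apply Rabs_pos; try apply pow_le; try apply pow2_ge_0; lra)] | lra | (assert (0 <= t * (B / 2 - beta * B - beta)) by (apply Rmult_le_pos; lra); lra) | first [apply pow2_ge_0 | lra | (apply Rmult_le_pos; lra)] | lra ]. }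
    assert (T8 : B * t * Rabs nu * exp ((gamma - 3 / 2) * (B * t)) *
        Rpower (rr a b beta Cs Cz m) (1 / 4) <= T0 * exp (- (beta * (B * t))) / (10 * C)).
    { replace (B * t * Rabs nu) with (B * Rabs nu * t) by ring.
      assert (0 <= Rabs nu) by apply Rabs_pos.
      apply Rle_trans with (B * Rabs nu * t * exp ((gamma - 3 / 2) * (B * t)) * K).
      { assert (0 < exp ((gamma - 3 / 2) * (B * t))) by apply exp_pos.
        assert (0 <= B * Rabs nu * t * exp ((gamma - 3 / 2) * (B * t))).
        { repeat apply Rmult_le_pos; lra. }
        apply Rmult_le_compat_l; auto. }
      apply (G beta B t M C); [lra|lra|lra|lra|lra| first [lra | (repeat apply Rmult_le_pos; try apply Rabs_pos; try apply pow_le; try apply pow2_ge_0; lra)] | lra | (assert (0 <= t * ((3/2 - gamma) * B - beta * B - beta)) by (apply Rmult_le_pos; lra); lra) | first [apply pow2_ge_0 | lra | (apply Rmult_le_pos; lra)] | lra ]. }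
    assert (T9 : B * t * exp (1 / 2 * t) * exp (- (1 / 2) * (B * t)) *
        Rpower (rr a b beta Cs Cz m) (1 / 2) * SS a b beta Cs Cz m 0
        <= T0 * exp (- (beta * (B * t))) / (10 * C)).
    { apply Rle_trans with (B * t * exp (1 / 2 * t) * exp (- (1 / 2) * (B * t)) * s * (u ^ 3 * s)).
      { assert (0 < exp (1/2 * t)) by apply exp_pos.
        assert (0 < exp (- (1 / 2) * (B * t))) by apply exp_pos.
        assert (0 <= B * t * exp (1 / 2 * t) * exp (- (1 / 2) * (B * t))).
        { apply Rmult_le_pos; [|lra]. apply Rmult_le_pos; lra. }
        apply Rmult_le_compat; try lra. apply Rmult_le_pos; lra.
        apply Rmult_le_compat_l; lra. }
      replace (B * t * exp (1 / 2 * t) * exp (- (1 / 2) * (B * t)) * s * (u ^ 3 * s))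
        with (B * t * u ^ 3 * exp (1 / 2 * t + - (1 / 2) * (B * t)) * (s * s))
        by (rewrite !exp_plus; ring).
      apply (G beta B t M C); [lra|lra|lra|lra|lra| first [lra | (repeat apply Rmult_le_pos; try apply Rabs_pos; try apply pow_le; try apply pow2_ge_0; lra)] | lra | (assert (0 <= t * ((B - 1) / 2 - beta * B - beta)) by (apply Rmult_le_pos; lra); lra) | first [apply pow2_ge_0 | lra | (apply Rmult_le_pos; lra)] | lra ]. }
    assert (T10 : B * t * exp (- (1 / 2) * (B * t)) * Rpower (rr a b beta Cs Cz m) (1 / 2) * Cz
        <= T0 * exp (- (beta * (B * t))) / (10 * C)).
    { apply Rle_trans with (B * t * exp (- (1 / 2) * (B * t)) * (s * Cz)).
      { assert (0 < exp (- (1 / 2) * (B * t))) by apply exp_pos.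
        assert (0 <= B * t * exp (- (1 / 2) * (B * t))) by (apply Rmult_le_pos; lra).
        replace (B * t * exp (- (1 / 2) * (B * t)) * (s * Cz)) with (B * t * exp (- (1 / 2) * (B * t)) * s * Cz) by ring.
        apply Rmult_le_compat_r; auto. apply Rmult_le_compat_l; auto. }
      apply (G beta B t M C); [lra|lra|lra|lra|lra| first [lra | (repeat apply Rmult_le_pos; try apply Rabs_pos; try apply pow_le; try apply pow2_ge_0; lra)] | lra | (assert (0 <= t * (B / 2 - beta * B - beta)) by (apply Rmult_le_pos; lra); lra) | first [apply pow2_ge_0 | lra | (apply Rmult_le_pos; lra)] | lra ]. }
    set (W := T0 * exp (- (beta * (B * t))) / (10 * C)) in *.
    assert (HW : C * (10 * W) = T0 * exp (- (beta * (B * t)))) by (unfold W; field; lra).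
    fold T0. rewrite <- HW. apply Rmult_le_compat_l; [lra|].
    lra.
Qed.
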